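(* Let $N>K$ and let $\mathbf{d}_u=(d_1,\dots,d_K)$ be a demand vector with pairwise distinct entries. Let the cache configuration $\mathcal{C}$ be produced by the new placement scheme with $F=\lceil N/M\rceil F'$ packets per file, and let $t=K/\lceil N/M\rceil$. If $$F\le \frac{\lceil N/M\rceil}{2K}\left(1-\frac{1}{\lceil N/M\rceil}\right)\exp\!\left(2t\Big(1-\frac{t}{K}\Big)\Big(1-\frac1K\Big)\right),$$ then $$\mathbb{E}\big[R^{nd}(\mathcal{C},\mathbf{d}_u)\big]\ge \frac12\Big(1-\frac{M}{N}\Big)K,$$ where the expectation is over the random placement.
   Context: Setting: a server holds a library of $N$ files, each split into $F$ packets (packet $f$ of file $n$ denoted $(n,f)$); $K$ users each have a cache holding $M$ files' worth of packets ($M\le N$). For a cache configuration, $S_{n,f}\subseteq[1:K]$ denotes the set of users whose cache stores packet $(n,f)$. User $k$ requests file $d_k$. New placement scheme: $F=\lceil N/M\rceil F'$ with $F'$ a positive integer; the packets of every file are partitioned into $F'$ groups of $\lceil N/M\rceil$ packets each. For every user $k$, file $n$ and group of file $n$, exactly one packet of that group is chosen uniformly at random and stored in user $k$'s cache; all choices are mutually independent. Delivery scheme and its rate $R^{nd}$: for $k\in[1:K]$ and $T\subseteq[1:K]\setminus\{k\}$, let $V_{k,T}$ be the set of packets $f$ of file $d_k$ with $S_{d_k,f}=T$ exactly. For every nonempty $\mathcal{S}\subseteq[1:K]$ the scheme transmits the XOR of the packet vectors $V_{k,\mathcal{S}\setminus\{k\}}$, $k\in\mathcal{S}$ (shorter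 vectors zero-padded to the longest). Its normalized number of transmissions is $$R^{nd}(\mathcal{C},\mathbf{d})=\sum_{\emptyset\ne\mathcal{S}\subseteq[1:K]}\frac{\max_{k\in\mathcal{S}}|V_{k,\mathcal{S}\setminus\{k\}}|}{F}.$$ *)

(* Defs.v *)
From mathcomp Require Import all_boot all_order all_algebra.
From mathcomp Require Import all_classical all_reals all_analysis.
Set Implicit Arguments. Unset Strict Implicit. Unset Printing Implicit Defensive.
Import Order.TTheory GRing.Theory Num.Theory.
Local Open Scope ring_scope.

(* Cache configuration produced by the new placement scheme, with q := ceil(N/M)
   packets per group and F' groups per file.  Packet (g, j) : 'I_F' * 'I_q is the
   j-th packet of group g (so a file has F = q * F' packets).  A configuration is
   the choice c (k, n, g) : 'I_q of the packet of group g of file n cached by user k. *)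
Definition placement (K N F' q : nat) := {ffun 'I_K * 'I_N * 'I_F' -> 'I_q}.

Definition Sset K N F' q (c : placement K N F' q) (n : 'I_N) (f : 'I_F' * 'I_q)
  : {set 'I_K} := [set k | c (k, n, f.1) == f.2].

Definition Vcard K N F' q (c : placement K N F' q) (d : 'I_K -> 'I_N)
  (k : 'I_K) (T : {set 'I_K}) : nat :=
  #|[set f : 'I_F' * 'I_q | Sset c (d k) f == T]|.

Definition Rnd {R : realType} K N F' q (c : placement K N F' q) (d : 'I_K -> 'I_N) : R :=
  \sum_(S : {set 'I_K} | S != finset.set0)
     ((\max_(k in S) Vcard c d k (S :\ k))%N)%:R / (q * F')%:R.

(* Expectation over the uniform (independent, uniform per group) random placement *)
Definition ERnd {R : realType} K N F' q (d : 'I_K -> 'I_N) : R :=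
  (\sum_(c : placement K N F' q) Rnd c d) / #|{: placement K N F' q}|%:R.

Definition qceil {R : realType} (N : nat) (M : R) : nat := `|Num.ceil (N%:R / M)|%N.

(* Main.v *)
Require Import Defs.
From mathcomp Require Import all_boot all_order all_algebra.
From mathcomp Require Import all_classical all_reals all_analysis.
From mathcomp Require Import ring lra zify.
Set Implicit Arguments. Unset Strict Implicit. Unset Printing Implicit Defensive.
Import Order.TTheory GRing.Theory Num.Theory.
Local Open Scope ring_scope.


Section Gen.
Variable R : realType.

Lemma sum_ffun_prod (Z J : finType) (phi : Z -> J -> R) :
  \sum_(h : {ffun Z -> J}) \prod_z phi z (h z) = \prod_z \sum_j phi z j.
Proof. by rewrite bigA_distr_bigA. Qed.

Lemma card_ffunR (Z J : finType) :
  #|{ffun Z -> J}|%:R = \prod_(z : Z) (#|J|%:R : R).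
Proof.
have := sum_ffun_prod (fun (_ : Z) (_ : J) => (1 : R)).
rewrite big1_eq sumr_const => ->.
by apply: eq_bigr => z _; rewrite sumr_const.
Qed.

Lemma sum_ind (J : finType) (F : J -> R) a : \sum_i F i * (i == a)%:R = F a.
Proof.
rewrite (bigD1 a) //= eqxx mulr1 big1 ?addr0 // => i /negbTE ->.
by rewrite mulr0.
Qed.

Lemma sum_ind1 (J : finType) (a : J) : \sum_i (i == a)%:R = 1 :> R.
Proof. by rewrite -[RHS](sum_ind (fun _ => 1) a); apply: eq_bigr => i _; rewrite mul1r. Qed.

Lemma sum_ffun_pair (Z J : finType) (x y : Z) (psi : J -> J -> R) : x != y ->
  (#|J|%:R ^+ 2) * \sum_(h : {ffun Z -> J}) psi (h x) (h y)
  = #|{ffun Z -> J}|%:R * \sum_i \sum_j psi i j.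
Proof.
move=> xy.
pose phi (i j : J) (z : Z) (k : J) : R := if z == x then (k == i)%:R else if z == y then (k == j)%:R else 1.
have E (h : {ffun Z -> J}) : psi (h x) (h y) = \sum_i \sum_j psi i j * \prod_z phi i j z (h z).
  have P i j : \prod_z phi i j z (h z) = (h x == i)%:R * (h y == j)%:R.
    rewrite (bigD1 x) //= (bigD1 y) /=; last by rewrite eq_sym.
    rewrite /phi eqxx (negbTE (_ : y != x)) ?eqxx; last by rewrite eq_sym.
    rewrite big1 ?mulr1 // => z /andP[zx zy].
    by rewrite (negbTE zx) (negbTE zy).
  under eq_bigr do under eq_bigr do rewrite P mulrA.
  have Q i : \sum_j psi i j * (h x == i)%:R * (h y == j)%:R = psi i (h y) * (h x == i)%:R.
    rewrite -[RHS](sum_ind (fun j => psi i j * (h x == i)%:R) (h y)).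
    by apply: eq_bigr => j _; rewrite [h y == _]eq_sym.
  under eq_bigr do rewrite Q.
  rewrite -[LHS](sum_ind (fun i => psi i (h y)) (h x)).
  by apply: eq_bigr => i _; rewrite [h x == _]eq_sym.
under eq_bigr do rewrite E.
rewrite exchange_big /=.
under eq_bigr => i _ do rewrite exchange_big /=.
have C i j : (#|J|%:R ^+ 2) * \prod_z \sum_k phi i j z k = #|{ffun Z -> J}|%:R.
  have L1 : \prod_z \sum_k phi i j z k = \prod_(z | (z != x) && (z != y)) (#|J|%:R : R).
    rewrite (bigD1 x) //= (bigD1 y) /=; last by rewrite eq_sym.
    rewrite /phi eqxx (negbTE (_ : y != x)) ?eqxx; last by rewrite eq_sym.
    rewrite !sum_ind1 !mul1r.
    apply: eq_bigr => z /andP[zx zy]; rewrite (negbTE zx) (negbTE zy).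
    by rewrite sumr_const.
  have L2 : \prod_(z : Z) (#|J|%:R : R) = #|J|%:R ^+2 * \prod_(z | (z != x) && (z != y)) (#|J|%:R : R).
    rewrite (bigD1 x) //= (bigD1 y) /=; last by rewrite eq_sym.
    by rewrite expr2 mulrA.
  by rewrite card_ffunR L1 L2.
rewrite [LHS]mulr_sumr [RHS]mulr_sumr; apply: eq_bigr => i _.
rewrite [LHS]mulr_sumr [RHS]mulr_sumr; apply: eq_bigr => j _.
rewrite -mulr_sumr sum_ffun_prod -(C i j).
by rewrite mulrCA mulrC.
Qed.

Lemma sum_ffun_one (Z J : finType) (x : Z) (psi : J -> R) :
  #|J|%:R * \sum_(h : {ffun Z -> J}) psi (h x)
  = #|{ffun Z -> J}|%:R * \sum_i psi i.
Proof.
pose phi (i : J) (z : Z) (k : J) : R := if z == x then (k == i)%:R else 1.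
have E (h : {ffun Z -> J}) : psi (h x) = \sum_i psi i * \prod_z phi i z (h z).
  have P i : \prod_z phi i z (h z) = (h x == i)%:R.
    rewrite (bigD1 x) //= /phi eqxx big1 ?mulr1 // => z zx.
    by rewrite (negbTE zx).
  under eq_bigr do rewrite P.
  rewrite -[LHS](sum_ind (fun i => psi i) (h x)).
  by apply: eq_bigr => i _; rewrite [h x == _]eq_sym.
under eq_bigr do rewrite E.
rewrite exchange_big /=.
have C i : #|J|%:R * \prod_z \sum_k phi i z k = #|{ffun Z -> J}|%:R.
  have L1 : \prod_z \sum_k phi i z k = \prod_(z | z != x) (#|J|%:R : R).
    rewrite (bigD1 x) //= /phi eqxx sum_ind1 !mul1r.
    apply: eq_bigr => z zx; rewrite (negbTE zx).
    by rewrite sumr_const.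
  by rewrite card_ffunR L1 [RHS](bigD1 x).
rewrite [LHS]mulr_sumr [RHS]mulr_sumr; apply: eq_bigr => i _.
by rewrite -mulr_sumr sum_ffun_prod -(C i) mulrCA mulrC.
Qed.

Lemma block (A B C J : finType) (G : A -> {ffun B * C -> J} -> R) :
  \sum_(c : {ffun A * B * C -> J}) \prod_j G j [ffun y => c (j, y.1, y.2)]
  = \prod_j \sum_h G j h.
Proof.
rewrite bigA_distr_bigA /=.
pose u (Cf : {ffun A -> {ffun B * C -> J}}) : {ffun A * B * C -> J} :=
  [ffun x => Cf x.1.1 (x.1.2, x.2)].
pose v (c : {ffun A * B * C -> J}) : {ffun A -> {ffun B * C -> J}} :=
  [ffun j => [ffun y => c (j, y.1, y.2)]].
have uv : cancel u v.
  move=> Cf; apply/ffunP => j; rewrite ffunE; apply/ffunP => -[b cc].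
  by rewrite !ffunE.
have vu : cancel v u.
  move=> c; apply/ffunP => -[[j b] cc]; by rewrite !ffunE.
rewrite (reindex u) /=; last by exists v => ? _.
apply: eq_bigr => Cf _; apply: eq_bigr => j _.
congr (G j _); apply/ffunP => -[b cc]; by rewrite !ffunE.
Qed.

End Gen.


Lemma max_lb (I : finType) (S : {set I}) (V : I -> nat) :
  (\sum_(k in S) V k <= \max_(k in S) V k
     + \sum_(k in S) \sum_(k' in S | k' != k) V k * V k')%N.
Proof.
have [S0|Sn0] := eqVneq #|S| 0%N.
  rewrite (eq_bigl (fun _ => false)); first by rewrite big_pred0.
  move=> k /=; apply/negbTE; apply/negP => kS; move: S0; by rewrite (cardD1 k) kS.
have hS : (0 < #|S|)%N by rewrite lt0n.
have [k0 k0S Hm] := eq_bigmax_cond V hS.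
rewrite Hm.
rewrite (bigD1 k0) //= leq_add2l.
apply: (@leq_trans (\sum_(k in S | k != k0) \sum_(k' in S | k' != k) V k * V k')).
  apply: leq_sum => k /andP[kS kk0].
  have Vk : (V k <= V k0)%N.
    by rewrite -Hm; exact: leq_bigmax_cond.
  rewrite (bigD1 k0) /=; last by rewrite k0S eq_sym.
  apply: leq_trans (leq_addr _ _). nia.
rewrite [X in (_ <= X)%N](bigD1 k0) //=. exact: leq_addl.
Qed.

Lemma setA (I : finType) (k : I) (S T : {set I}) :
  (k \in S) && (T == S :\ k) = (S == k |: T) && (k \notin T).
Proof.
apply/andP/andP => [[kS /eqP ->]|[/eqP -> kT]].
  by split; [rewrite finset.setD1K | rewrite !inE eqxx].
by split; [rewrite setU11 | rewrite setU1K].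
Qed.

Definition Psi (K q : nat) (k k' : 'I_K) (a a' : 'I_q) (j : 'I_K) (u v : 'I_q) : bool :=
  if j == k then (u != a) && (v == a')
  else if j == k' then (u == a) && (v != a')
  else ((u == a) == (v == a')).

Section R.
Variable R : realType.

Lemma sum_eq_and (I : finType) (X : I) (B : bool) :
  \sum_(S : I) ((S == X) && B)%:R = B%:R :> R.
Proof. by rewrite (bigD1 X) //= eqxx big1 ?addr0 // => S /negbTE ->. Qed.

Variables (K N F' q : nat) (d : 'I_K -> 'I_N) (c : placement K N F' q).

Lemma VcardE k T : (Vcard c d k T)%:R = \sum_f (Sset c (d k) f == T)%:R :> R.
Proof.
rewrite /Vcard -sum1_card natr_sum big_mkcond /=.
by apply: eq_bigr => f _; rewrite inE; case: (_ == T).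
Qed.

Lemma Xeq : \sum_(S : {set 'I_K}) \sum_(k in S) (Vcard c d k (S :\ k))%:R
  = \sum_k \sum_(f : 'I_F' * 'I_q) (c (k, d k, f.1) != f.2)%:R :> R.
Proof.
have E (S : {set 'I_K}) : \sum_(k in S) (Vcard c d k (S :\ k))%:R
   = \sum_k \sum_f ((k \in S) && (Sset c (d k) f == S :\ k))%:R :> R.
  rewrite big_mkcond; apply: eq_bigr => k _; case: (k \in S) => /=.
    by rewrite VcardE.
  by rewrite big1.
under eq_bigr do rewrite E.
rewrite exchange_big; apply: eq_bigr => k _.
rewrite exchange_big; apply: eq_bigr => f _.
under eq_bigr do rewrite setA.
by rewrite sum_eq_and inE.
Qed.


Lemma condE (k k' : 'I_K) (S T1 T2 : {set 'I_K}) :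
  [&& k' != k, k \in S, k' \in S, T1 == S :\ k & T2 == S :\ k']
  = (S == k |: T1) && [&& k' != k, k \notin T1, k' \in k |: T1 & T2 == (k |: T1) :\ k'].
Proof.
case: (eqVneq S (k |: T1)) => [->|SX] /=.
  rewrite setU11 /=.
  case kT: (k \in T1) => /=.
    have -> : (T1 == (k |: T1) :\ k) = false.
      apply/negbTE/negP => /eqP E; move: kT; rewrite E !inE eqxx.
      by [].
    by rewrite !andbF.
  by rewrite setU1K ?kT // eqxx.
have := setA k S T1; rewrite (negbTE SX) /=.
by case: (k \in S); case: (T1 == S :\ k); rewrite /= ?andbF.
Qed.

Lemma Ceq : \sum_(S : {set 'I_K}) \sum_(k in S) \sum_(k' in S | k' != k)
     (Vcard c d k (S :\ k) * Vcard c d k' (S :\ k'))%:R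
  = \sum_k \sum_k' \sum_(f : 'I_F' * 'I_q) \sum_(f' : 'I_F' * 'I_q)
     ([&& k' != k, k \notin Sset c (d k) f, k' \in k |: Sset c (d k) f
       & Sset c (d k') f' == (k |: Sset c (d k) f) :\ k'])%:R :> R.
Proof.
have E (S : {set 'I_K}) : \sum_(k in S) \sum_(k' in S | k' != k)
     (Vcard c d k (S :\ k) * Vcard c d k' (S :\ k'))%:R
  = \sum_k \sum_k' \sum_(f : 'I_F' * 'I_q) \sum_(f' : 'I_F' * 'I_q)
     ([&& k' != k, k \in S, k' \in S, Sset c (d k) f == S :\ k
       & Sset c (d k') f' == S :\ k'])%:R :> R.
  rewrite big_mkcond; apply: eq_bigr => k _; case kS: (k \in S) => /=; last first.
    by rewrite big1 // => k' _; rewrite big1 // => f _; rewrite big1 // => f' _; rewrite andbF.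
  rewrite big_mkcond; apply: eq_bigr => k' _.
  case k'S: (k' \in S); case kk: (k' != k) => /=; last first.
  - by rewrite big1 // => f _; rewrite big1.
  - by rewrite big1 // => f _; rewrite big1.
  - by rewrite big1 // => f _; rewrite big1.
  rewrite natrM !VcardE mulr_suml; apply: eq_bigr => f _.
  rewrite mulr_sumr; apply: eq_bigr => f' _.
  by rewrite -natrM mulnb.
under eq_bigr do rewrite E.
rewrite exchange_big; apply: eq_bigr => k _.
rewrite exchange_big; apply: eq_bigr => k' _.
rewrite exchange_big; apply: eq_bigr => f _.
rewrite exchange_big; apply: eq_bigr => f' _.
under eq_bigr do rewrite condE.
by rewrite sum_eq_and.
Qed.


Lemma Rnd_lb :
  (\sum_k \sum_(f : 'I_F' * 'I_q) (c (k, d k, f.1) != f.2)%:R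
   - \sum_k \sum_k' \sum_(f : 'I_F' * 'I_q) \sum_(f' : 'I_F' * 'I_q)
     ([&& k' != k, k \notin Sset c (d k) f, k' \in k |: Sset c (d k) f
       & Sset c (d k') f' == (k |: Sset c (d k) f) :\ k'])%:R) / (q * F')%:R
  <= Rnd c d :> R.
Proof.
rewrite -Xeq -Ceq -sumrB mulr_suml /Rnd.
rewrite (bigD1 finset.set0) //= !big_set0 subrr mul0r add0r.
apply: ler_sum => S _.
apply: ler_wpM2r; first by rewrite invr_ge0 ler0n.
rewrite lerBlDr.
have := max_lb S (fun k => Vcard c d k (S :\ k)).
rewrite -(ler_nat R) natrD !natr_sum.
by under [X in _ <= _ + X -> _]eq_bigr do rewrite natr_sum.
Qed.


Lemma Bimp k k' (f f' : 'I_F' * 'I_q) :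
  [&& k' != k, k \notin Sset c (d k) f, k' \in k |: Sset c (d k) f
       & Sset c (d k') f' == (k |: Sset c (d k) f) :\ k'] ->
  forall j, Psi k k' f.2 f'.2 j (c (j, d k, f.1)) (c (j, d k', f'.1)).
Proof.
case/and4P => kk kT k'X /eqP T2E j.
have HT2 : (j \in Sset c (d k') f') = (j \in (k |: Sset c (d k) f) :\ k') by rewrite T2E.
move: HT2 kT k'X; rewrite /Psi /Sset !inE /= => HT2 kT k'X.
case: (eqVneq j k) => [jk|jk].
  subst j; rewrite kT /=. rewrite HT2 eqxx orTb andbT. by rewrite eq_sym.
case: (eqVneq j k') => [jk'|jk'].
  subst j. rewrite HT2 eqxx /= andbT. by move: k'X; rewrite (negbTE kk).
by rewrite HT2 jk' (negbTE jk) /= eqxx.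
Qed.

Lemma Bbound k k' (f f' : 'I_F' * 'I_q) :
  ([&& k' != k, k \notin Sset c (d k) f, k' \in k |: Sset c (d k) f
       & Sset c (d k') f' == (k |: Sset c (d k) f) :\ k'])%:R
  <= \prod_j (Psi k k' f.2 f'.2 j (c (j, d k, f.1)) (c (j, d k', f'.1)))%:R :> R.
Proof.
case H: [&& _, _, _ & _].
  by rewrite big1 // => j _; rewrite Bimp.
by apply: prodr_ge0 => j _; rewrite ler0n.
Qed.

End R.


Section E.
Variable R : realType.

Lemma sum_neq (J : finType) (a : J) : \sum_(i : J) (i != a)%:R = #|J|%:R - 1 :> R.
Proof.
have E i : (i != a)%:R = 1 - (i == a)%:R :> R by case: (i == a); rewrite ?subr0 ?subrr.
under eq_bigr do rewrite E.
by rewrite sumrB sum_ind1 sumr_const.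
Qed.

Lemma sum2M (J : finType) (f g : J -> R) :
  \sum_u \sum_v f u * g v = (\sum_u f u) * (\sum_v g v).
Proof. rewrite mulr_suml; apply: eq_bigr => u _; by rewrite mulr_sumr. Qed.

Variables (K q : nat).

Lemma spsi (k k' : 'I_K) (a a' : 'I_q) j :
  \sum_u \sum_v (Psi k k' a a' j u v)%:R
  = if j == k then q%:R - 1 else if j == k' then q%:R - 1
    else 1 + (q%:R - 1) ^+ 2 :> R.
Proof.
rewrite /Psi; case: (j == k); last case: (j == k').
- under eq_bigr do under eq_bigr do rewrite -mulnb natrM.
  by rewrite sum2M sum_neq sum_ind1 card_ord mulr1.
- under eq_bigr do under eq_bigr do rewrite -mulnb natrM.
  by rewrite sum2M sum_neq sum_ind1 card_ord mul1r.
have E (u v : 'I_q) : ((u == a) == (v == a'))%:R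
   = (u == a)%:R * (v == a')%:R + (u != a)%:R * (v != a')%:R :> R.
  by case: (u == a); case: (v == a'); rewrite ?mulr0 ?mul0r ?addr0 ?add0r ?mulr1.
under eq_bigr do under eq_bigr do rewrite E.
under eq_bigr do rewrite big_split /=.
by rewrite big_split /= !sum2M !sum_neq !sum_ind1 card_ord mulr1 expr2.
Qed.

End E.


Section E2.
Variable R : realType.
Variables (K N F' q : nat) (d : 'I_K -> 'I_N) (hd : injective d) (hq : (0 < q)%N).

Lemma cardP : #|{: placement K N F' q}|%:R
  = \prod_(j : 'I_K) (#|{: {ffun 'I_N * 'I_F' -> 'I_q}}|%:R) :> R.
Proof.
have := block (fun (_ : 'I_K) (_ : {ffun 'I_N * 'I_F' -> 'I_q}) => (1 : R)).
rewrite big1_eq sumr_const => ->.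
by apply: eq_bigr => j _; rewrite sumr_const.
Qed.

Lemma EX k (f : 'I_F' * 'I_q) :
  q%:R * \sum_(c : placement K N F' q) (c (k, d k, f.1) != f.2)%:R
  = #|{: placement K N F' q}|%:R * (q%:R - 1) :> R.
Proof.
have := sum_ffun_one (k, d k, f.1) (fun i : 'I_q => (i != f.2)%:R : R).
by rewrite sum_neq !card_ord.
Qed.

Lemma prod_split (k k' : 'I_K) (kk : k' != k) (e1 b : R) :
  \prod_j (if j == k then e1 else if j == k' then e1 else b)
  = e1 * e1 * \prod_(j | (j != k) && (j != k')) b.
Proof.
rewrite (bigD1 k) //= eqxx (bigD1 k') //= eqxx (negbTE kk) mulrA.
congr (_ * _); apply: eq_bigr => j /andP[jk jk'].
by rewrite (negbTE jk) (negbTE jk').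
Qed.

Lemma prod_rest (k k' : 'I_K) (kk : k' != k) (b : R) :
  b * b * \prod_(j | (j != k) && (j != k')) b = b ^+ K.
Proof.
rewrite -(prod_split kk) (eq_bigr (fun _ => b)); last by move=> j _; case: ifP => //; case: ifP.
by rewrite prodr_const card_ord.
Qed.

Lemma EC (k k' : 'I_K) (kk : k' != k) (f f' : 'I_F' * 'I_q) :
  \sum_(c : placement K N F' q)
     \prod_j (Psi k k' f.2 f'.2 j (c (j, d k, f.1)) (c (j, d k', f'.1)))%:R
  = #|{: placement K N F' q}|%:R *
    \prod_j ((if j == k then q%:R - 1 else if j == k' then q%:R - 1
    else 1 + (q%:R - 1) ^+ 2) / q%:R ^+ 2) :> R.
Proof.
pose G j (h : {ffun 'I_N * 'I_F' -> 'I_q}) : R :=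
  (Psi k k' f.2 f'.2 j (h (d k, f.1)) (h (d k', f'.1)))%:R.
transitivity (\sum_(c : placement K N F' q) \prod_j G j [ffun y => c (j, y.1, y.2)]).
  by apply: eq_bigr => c _; apply: eq_bigr => j _; rewrite /G !ffunE.
rewrite block cardP -big_split /=; apply: eq_bigr => j _.
have xy : (d k, f.1) != (d k', f'.1).
  apply/negP => /eqP [] /hd /eqP; by rewrite eq_sym (negbTE kk).
have := sum_ffun_pair (fun u v => (Psi k k' f.2 f'.2 j u v)%:R : R) xy.
rewrite spsi card_ord => Hp.
have q0 : q%:R ^+ 2 != 0 :> R by rewrite expf_eq0 pnatr_eq0 -lt0n hq.
apply: (mulfI q0); rewrite Hp /G; set s := (if _ then _ else _).
rewrite [RHS]mulrCA; congr (_ * _); by rewrite mulrCA mulfV // mulr1.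
Qed.

End E2.


Section A.
Variable R : realType.

Lemma arith (Q Fr M Nr : R) (K : nat) :
  (1 <= K)%N -> 1 <= Q -> 0 < Fr -> 0 < M -> Nr / M <= Q -> 0 < Nr ->
  Fr <= Q / (2 * K%:R) * (1 - 1 / Q)
         * expR (2 * (K%:R / Q) * (1 - K%:R / Q / K%:R) * (1 - 1 / K%:R)) ->
  1 / 2 * (1 - M / Nr) * K%:R <=
  (K%:R * Fr * ((Q - 1) / Q)
   - K%:R * (K%:R - 1) * Fr ^+ 2 *
     ((Q - 1) / Q ^+ 2 * ((Q - 1) / Q ^+ 2) * (((1 + (Q - 1) ^+ 2) / Q ^+ 2) ^+ K / (((1 + (Q - 1) ^+ 2) / Q ^+ 2) * ((1 + (Q - 1) ^+ 2) / Q ^+ 2))))) / Fr.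
Proof.
move=> K1 Q1 F0 M0 NMQ N0 hF.
set bb := (1 + (Q - 1) ^+ 2) / Q ^+ 2.
set Kr := K%:R.
have Kr1 : 1 <= Kr by rewrite /Kr ler1n.
have Q0 : Q != 0 by apply/negP => /eqP Q0; move: Q1; rewrite Q0; lra.
have Kr0 : Kr != 0 by apply/negP => /eqP Kr0; move: Kr1; rewrite Kr0; lra.
have Fr0 : Fr != 0 by apply/negP => /eqP Fr0; move: F0; rewrite Fr0; lra.
set p := 1 / Q.
have hp0 : 0 < p by rewrite /p divr_gt0 //; lra.
have hp1 : p <= 1 by rewrite /p ler_pdivrMr; lra.
have hpQ : p * Q = 1 by rewrite /p mul1r mulVf.
set x := 2 * p * (1 - p).
have hx0 : 0 <= x by rewrite /x; nra.
have hx1 : x <= 1 / 2 by rewrite /x; have := sqr_ge0 (2 * p - 1); rewrite expr2; nra.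
have hbb : bb = 1 - x by rewrite /bb /x /p; field.
have he1 : (Q - 1) / Q ^+ 2 = p * (1 - p) by rewrite /p; field.
have hexp : 2 * (Kr / Q) * (1 - Kr / Q / Kr) * (1 - 1 / Kr) = x * (Kr - 1).
  by rewrite /x /p; field; apply/andP.
have hb_ge : 1 / 2 <= bb by rewrite hbb; lra.
have hb0 : 0 < bb by lra.
have hb_le : bb <= expR (- x).
  by have := expR_ge1Dx (- x); rewrite hbb; lra.
have hbK : bb ^+ K <= expR (- x * Kr).
  rewrite /Kr expRM_natr; apply: lerXn2r; rewrite ?nnegrE ?expR_ge0 //; lra.
have hY : Fr * bb ^+ K <= Q / (2 * Kr) * (1 - p).
  have c0 : 0 <= Q / (2 * Kr) * (1 - p) by apply: mulr_ge0; [apply: divr_ge0; lra|lra].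
  apply: (le_trans (ler_pM _ _ hF hbK)); rewrite ?exprn_ge0 //; try lra.
  rewrite hexp -[X in X <= _]mulrA -expRD -/Kr -/p.
  have -> : x * (Kr - 1) + - x * Kr = - x by ring.
  rewrite -[X in _ <= X]mulr1 ler_wpM2l //.
  by rewrite expR_le1; lra.
have -> : (Kr * Fr * ((Q - 1) / Q) - Kr * (Kr - 1) * Fr ^+ 2 *
     ((Q - 1) / Q ^+ 2 * ((Q - 1) / Q ^+ 2) * (bb ^+ K / (bb * bb)))) / Fr
   = Kr * (1 - p) - Kr * (Kr - 1) * (p * (1 - p)) ^+ 2 * ((Fr * bb ^+ K) / (bb * bb)).
  rewrite he1 /p; field; apply/and3P; split => //; lra.
set Y := Fr * bb ^+ K.
have Y0 : 0 <= Y by rewrite /Y mulr_ge0 ?exprn_ge0 //; lra.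
have hZ : Y / (bb * bb) <= 4 * Y.
  rewrite ler_pdivrMr; last by nra.
  have hbb2 : 1 / 4 <= bb * bb by nra.
  have := mulr_ge0 Y0 (_ : 0 <= bb * bb - 1 / 4); rewrite subr_ge0 => /(_ hbb2) h; nra.
have hZ2 : Y / (bb * bb) <= 2 * Q * (1 - p) / Kr.
  apply: (le_trans hZ).
  have -> : 2 * Q * (1 - p) / Kr = 4 * (Q / (2 * Kr) * (1 - p)) by field.
  by rewrite ler_wpM2l //; lra.
set Z := Y / (bb * bb).
have Z0 : 0 <= Z by rewrite /Z divr_ge0 //; nra.
have hT : Kr * (Kr - 1) * (p * (1 - p)) ^+ 2 * Z <= 2 * (Kr - 1) * p * (1 - p) ^+ 3.
  have c0 : 0 <= Kr * (Kr - 1) * (p * (1 - p)) ^+ 2.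
    by apply: mulr_ge0; [apply: mulr_ge0; lra| apply: exprn_ge0; nra].
  apply: (le_trans (ler_wpM2l c0 hZ2)).
  have -> : Kr * (Kr - 1) * (p * (1 - p)) ^+ 2 * (2 * Q * (1 - p) / Kr)
    = 2 * (Kr - 1) * p * (1 - p) ^+ 3 * (p * Q) by field.
  by rewrite hpQ mulr1.
have hMN : p <= M / Nr.
  rewrite /p ler_pdivrMr; last by lra.
  have -> : 1 = M / Nr * (Nr / M) by field; apply/andP; split; lra.
  by rewrite ler_wpM2l // divr_ge0 //; lra.
have hq1 : p * (1 - p) <= 1 / 4 by have := sqr_ge0 (2 * p - 1); rewrite expr2; nra.
have h3 : 2 * (Kr - 1) * p * (1 - p) ^+ 3 <= (Kr - 1) * (1 - p) / 2.
  have A0 : 0 <= (Kr - 1) * (1 - p) ^+ 2 by apply: mulr_ge0; [lra| apply: exprn_ge0; lra].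
  have A1 : (Kr - 1) * (1 - p) ^+ 2 <= (Kr - 1) * (1 - p).
    rewrite ler_wpM2l; [by []|lra|]. rewrite expr2 -[X in _ <= X]mulr1 ler_wpM2l; lra.
  rewrite (_ : 2 * (Kr - 1) * p * (1 - p) ^+ 3 = 2 * (p * (1 - p)) * ((Kr - 1) * (1 - p) ^+ 2)); last by ring.
  nra.
nra.
Qed.

End A.


Section M.
Variable R : realType.
Variables (K N F' q : nat) (d : 'I_K -> 'I_N) (hd : injective d) (hq : (0 < q)%N).

Let Pc : R := #|{: placement K N F' q}|%:R.

Lemma q0 : q%:R != 0 :> R.
Proof. by rewrite pnatr_eq0 -lt0n. Qed.

Lemma sumX : \sum_(c : placement K N F' q) \sum_k \sum_(f : 'I_F' * 'I_q)
    (c (k, d k, f.1) != f.2)%:R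
  = K%:R * (F' * q)%:R * (Pc * (q%:R - 1) / q%:R) :> R.
Proof.
rewrite exchange_big /=.
under eq_bigr do rewrite exchange_big /=.
have E k f : \sum_(c : placement K N F' q) (c (k, d k, f.1) != f.2)%:R
   = Pc * (q%:R - 1) / q%:R :> R.
  apply: (mulfI q0); rewrite EX /Pc. set a := (_ * (q%:R - 1)).
  by rewrite mulrCA mulfV ?q0 // mulr1.
under eq_bigr do under eq_bigr do rewrite E.
rewrite sumr_const card_ord.
rewrite sumr_const card_prod !card_ord.
by rewrite -[RHS]mulrA [in RHS]mulr_natl [in RHS]mulr_natl.
Qed.


Lemma sum_constK (I : finType) (c : R) : \sum_(i : I) c = #|I|%:R * c.
Proof. by rewrite sumr_const mulr_natl. Qed.

Lemma sumC :
  \sum_(c : placement K N F' q) \sum_k \sum_k' \sum_(f : 'I_F' * 'I_q)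
     \sum_(f' : 'I_F' * 'I_q)
     ([&& k' != k, k \notin Sset c (d k) f, k' \in k |: Sset c (d k) f
       & Sset c (d k') f' == (k |: Sset c (d k) f) :\ k'])%:R
  <= K%:R * (K%:R - 1) * ((F' * q)%:R ^+ 2 * (Pc *
     ((q%:R - 1) / q%:R ^+ 2 * ((q%:R - 1) / q%:R ^+ 2) *
      (((1 + (q%:R - 1) ^+ 2) / q%:R ^+ 2) ^+ K /
       (((1 + (q%:R - 1) ^+ 2) / q%:R ^+ 2) * ((1 + (q%:R - 1) ^+ 2) / q%:R ^+ 2)))))) :> R.
Proof.
set W := Pc * _.
rewrite exchange_big /=.
under eq_bigr => k _ do rewrite exchange_big /=.
under eq_bigr => k _ do under eq_bigr => k' _ do rewrite exchange_big /=.
under eq_bigr => k _ do under eq_bigr => k' _ do under eq_bigr => f _ do rewrite exchange_big /=.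
apply: (@le_trans _ _ (\sum_(k : 'I_K) \sum_(k' : 'I_K) \sum_(f : 'I_F' * 'I_q)
     \sum_(f' : 'I_F' * 'I_q) ((k' != k)%:R * W))).
  apply: ler_sum => k _; apply: ler_sum => k' _; apply: ler_sum => f _; apply: ler_sum => f' _.
  case: (eqVneq k' k) => [->|kk].
    by rewrite mul0r big1.
  rewrite mul1r.
  apply: (@le_trans _ _ (\sum_(c : placement K N F' q)
     \prod_j (Psi k k' f.2 f'.2 j (c (j, d k, f.1)) (c (j, d k', f'.1)))%:R)).
    by apply: ler_sum => c _; have := Bbound R d c k k' f f'; rewrite (negbTE kk).
  rewrite (EC R hd hq kk) /W; rewrite le_eqVlt; apply/orP; left; apply/eqP; congr (_ * _).
  set bb := (1 + (q%:R - 1) ^+ 2) / q%:R ^+ 2.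
  set e1 := (q%:R - 1) / q%:R ^+ 2.
  rewrite (eq_bigr (fun j => if j == k then e1 else if j == k' then e1 else bb)); last first.
    by move=> j _; case: ifP => _ //; case: ifP.
  rewrite (prod_split kk); congr (_ * _).
  have bb0 : bb != 0.
    rewrite /bb mulf_neq0 // ?invr_eq0 ?expf_eq0 ?q0 ?andbF //.
    by apply/lt0r_neq0; rewrite ltr_pwDl // sqr_ge0.
  by rewrite -(prod_rest kk bb) mulrAC mulfV ?mul1r // mulf_neq0.
rewrite le_eqVlt; apply/orP; left; apply/eqP.
under eq_bigr do under eq_bigr do rewrite sum_constK sum_constK.
under eq_bigr do under eq_bigr do rewrite mulrA mulrCA.
under eq_bigr do rewrite -mulr_suml sum_neq.
rewrite sum_constK !card_prod !card_ord.
rewrite natrM; ring.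
Qed.

End M.

Unset Implicit Arguments.

Theorem theorem4 (R : realType) (N K F' : nat) (M : R)
  (hM0 : 0 < M) (hMN : M <= N%:R) (hNK : (K < N)%N) (hF' : (0 < F')%N)
  (d : 'I_K -> 'I_N) (hd : injective d) :
  let q := qceil N M in
  let F : R := (q * F')%:R in
  let t : R := K%:R / q%:R in
  F <= q%:R / (2 * K%:R) * (1 - 1 / q%:R)
         * expR (2 * t * (1 - t / K%:R) * (1 - 1 / K%:R)) ->
  1 / 2 * (1 - M / N%:R) * K%:R <= @ERnd R K N F' q d.
Proof.
move=> q F t hF.
have N0 : 0 < N%:R :> R by rewrite ltr0n; lia.
have NM1 : 1 <= N%:R / M by rewrite ler_pdivlMr // mul1r.
have c0 : (0 <= Num.ceil (N%:R / M))%R.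
  by rewrite real_ceil_ge0 ?num_real //; lra.
have hqR : q%:R = (Num.ceil (N%:R / M))%:~R :> R.
  by rewrite /q /qceil natr_absz ger0_norm.
have NMq : N%:R / M <= q%:R by rewrite hqR ceil_ge.
have Q1 : 1 <= q%:R :> R by lra.
have hq : (0 < q)%N by rewrite -(ltr0n R); lra.
have Pc0 : 0 < #|{: placement K N F' q}|%:R :> R.
  by rewrite ltr0n /placement card_ffun card_ord expn_gt0 hq.
have Rnd0 (c : placement K N F' q) : 0 <= Rnd c d :> R.
  by apply: sumr_ge0 => S _; apply: divr_ge0; rewrite ler0n.
case: (posnP K) => [K0|Kpos].
  have -> : K%:R = 0 :> R by rewrite K0.
  rewrite mulr0 /ERnd; apply: divr_ge0; last by rewrite ler0n.
  by apply: sumr_ge0 => c _.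
set Pc := (#|{: placement K N F' q}|%:R : R).
pose W : R := (q%:R - 1) / q%:R ^+ 2 * ((q%:R - 1) / q%:R ^+ 2) *
      (((1 + (q%:R - 1) ^+ 2) / q%:R ^+ 2) ^+ K /
       (((1 + (q%:R - 1) ^+ 2) / q%:R ^+ 2) * ((1 + (q%:R - 1) ^+ 2) / q%:R ^+ 2))).
have F0 : 0 < F by rewrite /F ltr0n muln_gt0 hq hF'.
have hsum : (K%:R * (F' * q)%:R * (Pc * (q%:R - 1) / q%:R)
    - K%:R * (K%:R - 1) * ((F' * q)%:R ^+ 2 * (Pc * W))) / (q * F')%:R
    <= \sum_(c : placement K N F' q) Rnd c d.
  apply: (@le_trans _ _ (\sum_(c : placement K N F' q)
    (\sum_k \sum_(f : 'I_F' * 'I_q) (c (k, d k, f.1) != f.2)%:R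
     - \sum_k \sum_k' \sum_(f : 'I_F' * 'I_q) \sum_(f' : 'I_F' * 'I_q)
     ([&& k' != k, k \notin Sset c (d k) f, k' \in k |: Sset c (d k) f
       & Sset c (d k') f' == (k |: Sset c (d k) f) :\ k'])%:R) / (q * F')%:R)).
    rewrite -mulr_suml sumrB (sumX R F' d hq).
    apply: ler_wpM2r; first by rewrite invr_ge0 ler0n.
    rewrite lerD2l lerN2.
    exact: (sumC R F' hd hq).
  by apply: ler_sum => c _; exact: Rnd_lb.
rewrite /ERnd -/Pc.
apply: (le_trans _ (ler_wpM2r (_ : 0 <= Pc^-1) hsum)); last by rewrite invr_ge0 ltW.
have -> : (K%:R * (F' * q)%:R * (Pc * (q%:R - 1) / q%:R)
    - K%:R * (K%:R - 1) * ((F' * q)%:R ^+ 2 * (Pc * W))) / (q * F')%:R / Pc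
  = (K%:R * F * ((q%:R - 1) / q%:R) - K%:R * (K%:R - 1) * F ^+ 2 * W) / F.
  rewrite /F mulnC; field.
  apply/and3P; split; first by rewrite pnatr_eq0 -lt0n.
    by rewrite pnatr_eq0 -lt0n.
  exact: lt0r_neq0.
apply: arith => //.
Qed.
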